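(* Let $G$ be a finite group of order $n$ and $f:G\to\mathbb{Z}$ a class function with $f(g)=f(g^{-1})$ for all $g\in G$. Then all eigenvalues of the Cayley colour graph $\Gamma_f=\operatorname{Cay}(G,f)$ are integers if and only if $f^h=f$ for all $h\in\mathbb{Z}_n^*$.
   Context: $\mathbb{Z}_n^*$ is the unit group of $\mathbb{Z}/n\mathbb{Z}$; $f^h(g)=f(g^h)$. The Cayley colour graph $\operatorname{Cay}(G,f)$ has vertex set $G$ and adjacency matrix $[f(gh^{-1})]_{g,h\in G}$; its eigenvalues are those of this matrix. *)

(* Defs.v *)
From HB Require Import structures.
From mathcomp Require Import all_boot all_order all_algebra all_fingroup all_field.
Set Implicit Arguments. Unset Strict Implicit. Unset Printing Implicit Defensive.
Import GRing.Theory Num.Theory.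
Local Open Scope ring_scope.

Definition cayley_mx (gT : finGroupType) (f : gT -> int) : 'M[algC]_#|gT| :=
  \matrix_(i, j) ((f (enum_val i * (enum_val j)^-1)%g)%:~R).

Definition fpow_inv (gT : finGroupType) (f : gT -> int) (h : nat) : Prop :=
  forall g : gT, f (g ^+ h)%g = f g.

(* Main.v *)
Require Import Defs.
From mathcomp Require Import all_boot all_order all_algebra all_fingroup all_field.
From mathcomp Require Import all_solvable all_character.
From mathcomp Require Import ring.
Set Implicit Arguments. Unset Strict Implicit. Unset Printing Implicit Defensive.
Import GRing.Theory Num.Theory.
Local Open Scope ring_scope.



Definition gmx (gT : finGroupType) (phi : gT -> algC) : 'M[algC]_#|gT| :=
  \matrix_(i, j) phi (enum_val i * (enum_val j)^-1)%g.

Definition conv (gT : finGroupType) (phi psi : gT -> algC) (y : gT) : algC :=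
  \sum_x phi x * psi (x^-1 * y)%g.

Lemma gmxM (gT : finGroupType) (phi psi : gT -> algC) :
  gmx phi *m gmx psi = gmx (conv phi psi).
Proof.
apply/matrixP => i j; rewrite !mxE /conv.
rewrite (reindex (@enum_rank gT)) /=; last first.
  by exists enum_val => x _; rewrite ?enum_rankK ?enum_valK.
under eq_bigr do rewrite !mxE enum_rankK.
have hinj : injective (fun x : gT => x^-1 * enum_val i)%g.
  by move=> a b /mulIg /invg_inj.
rewrite (reindex_inj hinj) /=.
apply: eq_bigr => x _.
by rewrite invMg invgK !mulgA mulgV mul1g.
Qed.

Lemma eig_decomp (N : nat) (I : finType) (A : 'M[algC]_N) (E : I -> 'M[algC]_N)
  (w : I -> algC) :
  \sum_i E i = 1%:M -> (forall i, A *m E i = w i *: E i) ->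
  (forall i, E i *m A = w i *: E i) -> (forall i, E i != 0) ->
  forall a, eigenvalue A a <-> exists i, a = w i.
Proof.
move=> sumE AE EA nzE a; split.
  case/eigenvalueP => v vA nzv.
  have [i nzi] : exists i, v *m E i != 0.
    apply/existsP; apply: contraR nzv; rewrite negb_exists => /forallP H.
    rewrite -[v]mulmx1 -sumE mulmx_sumr big1 // => i _.
    by have := H i; rewrite negbK => /eqP.
  exists i; apply/eqP; rewrite -subr_eq0.
  have : (a - w i) *: (v *m E i) = 0.
    rewrite scalerBl [a *: _]scalemxAl -vA -mulmxA AE -scalemxAr.
    by rewrite scalemxAl subrr.
  by move/eqP; rewrite scaler_eq0 (negbTE nzi) orbF.
case=> i ->; apply/eigenvalueP.
have [r nzr] : exists r, row r (E i) != 0.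
  apply/existsP; apply: contraR (nzE i); rewrite negb_exists => /forallP H.
  apply/eqP/row_matrixP => r; have := H r; rewrite negbK => /eqP ->.
  by rewrite row0.
exists (row r (E i)) => //.
by rewrite -row_mul EA linearZ.
Qed.



Lemma eq_conv (gT : finGroupType) (phi phi' psi psi' : gT -> algC) :
  phi =1 phi' -> psi =1 psi' -> conv phi psi =1 conv phi' psi'.
Proof. by move=> e1 e2 y; apply: eq_bigr => x _; rewrite e1 e2. Qed.

Lemma conv_suml (gT : finGroupType) (I : finType) (c : I -> algC)
  (phi : I -> gT -> algC) (psi : gT -> algC) y :
  conv (fun x => \sum_i c i * phi i x) psi y = \sum_i c i * conv (phi i) psi y.
Proof.
rewrite /conv; under eq_bigr do rewrite big_distrl.
rewrite exchange_big; apply: eq_bigr => i _; rewrite mulr_sumr.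
by apply: eq_bigr => x _; rewrite mulrA.
Qed.

Lemma conv_Zr (gT : finGroupType) (c : algC) (phi psi : gT -> algC) y :
  conv phi (fun x => c * psi x) y = c * conv phi psi y.
Proof.
rewrite /conv mulr_sumr; apply: eq_bigr => x _.
by rewrite mulrCA.
Qed.

Lemma conv_Zl (gT : finGroupType) (c : algC) (phi psi : gT -> algC) y :
  conv (fun x => c * phi x) psi y = c * conv phi psi y.
Proof.
rewrite /conv mulr_sumr; apply: eq_bigr => x _.
by rewrite mulrA.
Qed.

Lemma conv_irr (gT : finGroupType) (i j : Iirr [set: gT]%G) y :
  conv 'chi_j 'chi_i y = (i == j)%:R * (#|gT|%:R * ('chi_i y / 'chi_i 1%g)).
Proof.
have := generalized_orthogonality_relation y i j.
rewrite cardsT => H.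
rewrite mulrCA -H mulrA mulfV ?mul1r; last by rewrite pnatr_eq0 -lt0n -cardsT cardG_gt0.
rewrite /conv (reindex_inj invg_inj) /=.
under [RHS]eq_bigl do rewrite inE.
by apply: eq_bigr => x _; rewrite invgK mulrC.
Qed.

Definition ech (gT : finGroupType) (i : Iirr [set: gT]%G) (y : gT) : algC :=
  'chi_i 1%g / #|gT|%:R * 'chi_i y.

Lemma nG_neq0 (gT : finGroupType) : (#|gT|%:R : algC) != 0.
Proof. by rewrite pnatr_eq0 -lt0n -cardsT cardG_gt0. Qed.

Lemma conv_ech (gT : finGroupType) (i j : Iirr [set: gT]%G) y :
  conv (ech j) (ech i) y = (i == j)%:R * ech i y.
Proof.
rewrite /ech conv_Zl conv_Zr conv_irr.
have [<-|] := eqVneq i j; last by rewrite !mul0r !mulr0.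
have h1 := irr1_neq0 i; have h2 := nG_neq0 gT.
rewrite (_ : true%:R = 1) // !mul1r.
by field; rewrite ?h1 ?h2.
Qed.

Lemma sum_ech (gT : finGroupType) y :
  \sum_(i : Iirr [set: gT]%G) ech i y = (y == 1%g)%:R.
Proof.
have := cfRegE [set: gT]%G y; rewrite cfReg_sum sum_cfunE cardsT => H.
rewrite /ech.
transitivity (#|gT|%:R^-1 * \sum_i ('chi[[set: gT]%G]_i 1%g *: 'chi_i) y).
  rewrite mulr_sumr; apply: eq_bigr => i _; rewrite cfunE.
  by rewrite mulrA [_^-1 * _]mulrC.
rewrite H; case: (y == 1%g); rewrite ?mulr0 //.
by rewrite mulVf ?nG_neq0.
Qed.

Lemma gmx_eq (gT : finGroupType) (phi psi : gT -> algC) :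
  phi =1 psi -> gmx phi = gmx psi.
Proof. by move=> e; apply/matrixP => i j; rewrite !mxE e. Qed.

Lemma gmx_sum (gT : finGroupType) (I : finType) (phi : I -> gT -> algC) :
  \sum_i gmx (phi i) = gmx (fun y => \sum_i phi i y).
Proof. by apply/matrixP => i j; rewrite summxE !mxE; apply: eq_bigr => k _; rewrite mxE. Qed.

Lemma gmxZ (gT : finGroupType) (c : algC) (phi : gT -> algC) :
  c *: gmx phi = gmx (fun y => c * phi y).
Proof. by apply/matrixP => i j; rewrite !mxE. Qed.

Lemma gmx_delta (gT : finGroupType) :
  gmx (fun y : gT => (y == 1%g)%:R) = 1%:M.
Proof.
apply/matrixP => i j; rewrite !mxE -eq_mulgV1.
by rewrite (inj_eq enum_val_inj).
Qed.

Lemma cf_subproof (gT : finGroupType) (phi : gT -> algC)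
  (hJ : forall x y, phi (x ^ y)%g = phi x) :
  is_class_fun <<[set: gT]>>%g [ffun x => phi x].
Proof. by rewrite genGid; apply: intro_class_fun => // x; rewrite inE. Qed.

Definition cfOf (gT : finGroupType) (phi : gT -> algC)
  (hJ : forall x y, phi (x ^ y)%g = phi x) : 'CF([set: gT]%G) :=
  Cfun 0 (cf_subproof hJ).

Lemma cfOfE (gT : finGroupType) (phi : gT -> algC)
  (hJ : forall x y, phi (x ^ y)%g = phi x) x : cfOf hJ x = phi x.
Proof. exact: cfunE. Qed.

Definition om (gT : finGroupType) (Fc : 'CF([set: gT]%G)) (k : Iirr [set: gT]%G) :=
  '[Fc, 'chi_k] * #|gT|%:R / 'chi_k 1%g.

Lemma cf_expand (gT : finGroupType) (Fc : 'CF([set: gT]%G)) x :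
  Fc x = \sum_i '[Fc, 'chi_i] * 'chi_i x.
Proof.
by rewrite {1}(cfun_sum_cfdot Fc) sum_cfunE; apply: eq_bigr => i _; rewrite cfunE.
Qed.

Lemma conv_F_ech (gT : finGroupType) (Fc : 'CF([set: gT]%G)) k y :
  conv Fc (ech k) y = om Fc k * ech k y.
Proof.
rewrite (eq_conv (cf_expand Fc) (frefl _)) conv_suml.
rewrite (bigD1 k) //= big1 ?addr0; last first.
  by move=> i nik; rewrite /ech conv_Zr conv_irr eq_sym (negbTE nik) !mul0r !mulr0.
rewrite /ech conv_Zr conv_irr eqxx /om.
have h1 := irr1_neq0 k; have h2 := nG_neq0 gT.
rewrite (_ : true%:R = 1) // !mul1r.
by field; rewrite ?h1 ?h2.
Qed.

Lemma conv_ech_F (gT : finGroupType) (Fc : 'CF([set: gT]%G)) k y :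
  conv (ech k) Fc y = om Fc k * ech k y.
Proof.
rewrite (eq_conv (frefl _) (cf_expand Fc)).
rewrite /conv.
under eq_bigr do rewrite mulr_sumr.
rewrite exchange_big /=.
rewrite [LHS](bigD1 k) //= [X in _ + X]big1 ?addr0; last first.
  move=> i nik.
  transitivity ('[Fc,'chi_i] * ('chi_k 1%g / #|gT|%:R) * conv 'chi_k 'chi_i y).
    by rewrite /conv mulr_sumr; apply: eq_bigr => x _; rewrite /ech; ring.
  by rewrite conv_irr (negbTE nik) !mul0r mulr0.
have h1 := irr1_neq0 k; have h2 := nG_neq0 gT.
transitivity ('[Fc, 'chi_k] * ('chi_k 1%g / #|gT|%:R) * conv 'chi_k 'chi_k y).
  by rewrite /conv mulr_sumr; apply: eq_bigr => x _; rewrite /ech; ring.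
rewrite conv_irr eqxx (_ : true%:R = 1) // mul1r /om /ech.
by field; rewrite ?h1 ?h2.
Qed.

Lemma ech_neq0 (gT : finGroupType) (k : Iirr [set: gT]%G) : gmx (ech k) != 0.
Proof.
apply/eqP => /matrixP /(_ (enum_rank 1%g) (enum_rank 1%g)).
rewrite !mxE enum_rankK mulgV /ech => /eqP.
by rewrite mulf_eq0 mulf_eq0 invr_eq0 (negbTE (irr1_neq0 k)) (negbTE (nG_neq0 gT)).
Qed.

Lemma spectrum (gT : finGroupType) (Fc : 'CF([set: gT]%G)) a :
  eigenvalue (gmx Fc) a <-> exists k, a = om Fc k.
Proof.
apply: (eig_decomp (E := fun k => gmx (ech k))).
- by rewrite gmx_sum (gmx_eq (@sum_ech gT)) gmx_delta.
- by move=> k; rewrite gmxM (gmx_eq (conv_F_ech Fc k)) gmxZ.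
- by move=> k; rewrite gmxM (gmx_eq (conv_ech_F Fc k)) gmxZ.
- exact: ech_neq0.
Qed.



Lemma aut_pow (u : {rmorphism algC -> algC}) (n : nat) : (0 < n)%N ->
  exists k, coprime k n /\ forall z, z ^+ n = 1 -> u z = z ^+ k.
Proof.
move=> n_gt0; have [z prim_z] := C_prim_root_exists n_gt0.
have prim_u : n.-primitive_root (u z) by rewrite fmorph_primitive_root.
have [i Di] := prim_rootP prim_z (prim_expr_order prim_u).
exists i; split.
  by rewrite -(prim_root_exp_coprime i prim_z) -Di.
move=> x /(prim_rootP prim_z) [j ->].
by rewrite rmorphXn Di exprAC.
Qed.

Lemma char_aut (gT : finGroupType) (u : {rmorphism algC -> algC}) (k : nat)
  (hu : forall z, z ^+ #|gT| = 1 -> u z = z ^+ k)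
  (i : Iirr [set: gT]%G) (x : gT) :
  u ('chi_i x) = 'chi_i (x ^+ k)%g.
Proof.
pose H := <[x]>%G.
have sHG : H \subset [set: gT]%G by apply: subsetT.
have [r Dr] := char_sum_irr (cfRes_char H (irr_char i)).
rewrite -(cfResE _ sHG (cycle_id x)) -(cfResE _ sHG (mem_cycle x k)) Dr.
rewrite !sum_cfunE rmorph_sum; apply: eq_bigr => j _.
have lin := irr_cyclic_lin j (cycle_cyclic x).
rewrite lin_charX ?cycle_id //; apply: hu.
have /dvdnP [q ->] : (#[x]%g %| #|gT|)%N by rewrite -cardsT order_dvdG ?inE.
by rewrite mulnC exprM lin_char_unity_root ?cycle_id ?expr1n.
Qed.



Lemma cfdot_inv (gT : finGroupType) (Fc : 'CF([set: gT]%G)) (k : Iirr [set: gT]%G) :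
  '[Fc, 'chi_k] = #|gT|%:R^-1 * \sum_x Fc x * 'chi_k (x^-1)%g.
Proof.
rewrite cfdotE cardsT; congr (_ * _).
under eq_bigl do rewrite inE.
by apply: eq_bigr => x _; rewrite irr_inv.
Qed.

Lemma om_formula (gT : finGroupType) (Fc : 'CF([set: gT]%G)) (k : Iirr [set: gT]%G) :
  om Fc k = (\sum_x Fc x * 'chi_k (x^-1)%g) / 'chi_k 1%g.
Proof.
rewrite /om cfdot_inv; have h2 := nG_neq0 gT.
have h1 := irr1_neq0 k.
by field; rewrite ?h1 ?h2.
Qed.

Lemma cf_eq_sums (gT : finGroupType) (P Q : 'CF([set: gT]%G)) :
  (forall k : Iirr [set: gT]%G,
     \sum_x P x * 'chi_k (x^-1)%g = \sum_x Q x * 'chi_k (x^-1)%g) -> P = Q.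
Proof.
move=> H; rewrite (cfun_sum_cfdot P) (cfun_sum_cfdot Q).
by apply: eq_bigr => k _; rewrite !cfdot_inv H.
Qed.

Lemma expg_inj (gT : finGroupType) (h : nat) : coprime h #|gT| ->
  injective (fun x : gT => x ^+ h)%g.
Proof.
move=> cop x y /= exy.
have cop' : coprime #|[set: gT]%G| h by rewrite cardsT coprime_sym.
have K := expgK cop'.
by rewrite -(K x) ?inE // -(K y) ?inE // exy.
Qed.

Lemma om_aut (gT : finGroupType) (u : {rmorphism algC -> algC}) (h : nat)
  (hu : forall z, z ^+ #|gT| = 1 -> u z = z ^+ h)
  (Fc : 'CF([set: gT]%G)) (hF : forall x, u (Fc x) = Fc x) k :
  u (om Fc k) = (\sum_x Fc x * 'chi_k ((x ^+ h)^-1)%g) / 'chi_k 1%g.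
Proof.
rewrite om_formula fmorph_div rmorph_sum (char_aut hu) expg1n.
congr (_ / _); apply: eq_bigr => x _.
by rewrite rmorphM hF (char_aut hu) expgVn.
Qed.

Lemma rat_of_fixed (gT : finGroupType) (F : gT -> int) (Fc : 'CF([set: gT]%G))
  (hF : forall x, Fc x = (F x)%:~R) (k : Iirr [set: gT]%G) :
  (forall u : {rmorphism algC -> algC}, u (om Fc k) = om Fc k) ->
  om Fc k \in Crat.
Proof.
move=> fix_u.
have [Qn galQn [QnC gQnC [w _ QnG]]] := group_num_field_exists [set: gT]%G.
have dvd (x : gT) : (#[x]%g %| #|[set: gT]%G|)%N by exact: (@order_dvdG gT [set: gT]%G x (in_setT x)).
pose a x := sval (QnG _ _ 'chi_k (irr_char k) x (dvd x)).
have Da x : QnC (a x) = 'chi_k x by rewrite /a; case: (QnG _ _ _ _ _ _).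
pose b := (\sum_x (F x)%:~R * a (x^-1)%g) / a 1%g.
have Db : QnC b = om Fc k.
  rewrite om_formula /b fmorph_div rmorph_sum Da; congr (_ / _).
  by apply: eq_bigr => x _; rewrite rmorphM rmorph_int Da hF.
have : b \in fixedField 'Gal({:Qn} / 1)%g.
  apply/fixedFieldP; first exact: memvf.
  move=> nu Gnu; have [nuC DnuC] := gQnC nu.
  by apply: (fmorph_inj QnC); rewrite DnuC Db fix_u.
rewrite (galois_fixedField galQn) => /vlineP [r Dr].
by rewrite -Db Dr alg_num_field fmorph_rat Crat_rat.
Qed.



Lemma cayley_Aint (gT : finGroupType) (f : gT -> int) a :
  eigenvalue (cayley_mx f) a -> a \in Aint.
Proof.
pose A0 : 'M[int]_#|gT| := \matrix_(i, j) f (enum_val i * (enum_val j)^-1)%g.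
have -> : cayley_mx f = map_mx intr A0 by apply/matrixP => i j; rewrite !mxE.
rewrite eigenvalue_root_char -map_char_poly => ra.
apply: root_monic_Aint ra _ _; first exact/monic_map/char_poly_monic.
by apply/polyOverP => i; rewrite coef_map intr_int.
Qed.

Theorem mainTheorem8 (gT : finGroupType) (f : gT -> int)
  (hclass : forall x y : gT, f (x ^ y)%g = f x)
  (hsym : forall x : gT, f (x^-1)%g = f x) :
  (forall a : algC, eigenvalue (cayley_mx f) a -> a \is a Num.int) <->
  (forall h : nat, coprime h #|gT| -> fpow_inv f h).
Proof.
pose F := fun x : gT => ((f x)%:~R : algC).
have hJ : forall x y, F (x ^ y)%g = F x by move=> x y; rewrite /F hclass.
pose Fc := cfOf hJ.
have FcE x : Fc x = (f x)%:~R by rewrite cfOfE.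
have Dmx : cayley_mx f = gmx Fc by apply/matrixP => i j; rewrite !mxE FcE.
have n_gt0 : (0 < #|gT|)%N by rewrite -cardsT cardG_gt0.
split.
- move=> Hint h cop g.
  have om_int k : om Fc k \is a Num.int by apply: Hint; rewrite Dmx spectrum; exists k.
  have [u hu] := Qn_aut_exists cop.
  have hF x : u (Fc x) = Fc x by rewrite FcE rmorph_int.
  have S12 (k : Iirr [set: gT]%G) : \sum_x Fc x * 'chi_k ((x ^+ h)^-1)%g = \sum_x Fc x * 'chi_k (x^-1)%g.
    have := om_aut hu hF k; rewrite aut_intr // om_formula => E.
    have h1 := irr1_neq0 k.
    by apply: (mulIf (invr_neq0 h1)); rewrite -E.
  pose h' := expg_invn [set: gT]%G h.
  have cop' : coprime #|[set: gT]%G| h by rewrite cardsT coprime_sym.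
  have K (x : gT) : ((x ^+ h) ^+ h')%g = x by exact: (expgK cop' (in_setT x)).
  have hJ2 : forall x y, F ((x ^ y) ^+ h')%g = F (x ^+ h')%g.
    by move=> x y; rewrite -conjXg hJ.
  pose Pc := cfOf hJ2.
  have PF : Pc = Fc.
    apply: cf_eq_sums => k; rewrite -S12.
    rewrite (reindex_inj (expg_inj cop)) /=.
    by apply: eq_bigr => x _; rewrite cfOfE K FcE.
  have := congr1 (fun P : 'CF([set: gT]%G) => P (g ^+ h)%g) PF.
  rewrite /= cfOfE K FcE /F => /intr_inj.
  by move->.
- move=> Hpow a ea; have [k ->] : exists k, a = om Fc k by rewrite -spectrum -Dmx.
  apply: Cint_rat_Aint; last by apply: (@cayley_Aint _ f); rewrite Dmx spectrum; exists k.
  apply: (rat_of_fixed (F := f)) => // u.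
  have [h [cop hu]] := aut_pow u n_gt0.
  have hF x : u (Fc x) = Fc x by rewrite FcE rmorph_int.
  rewrite (om_aut hu hF) om_formula; congr (_ / _).
  rewrite [RHS](reindex_inj (expg_inj cop)) /=.
  by apply: eq_bigr => x _; rewrite !FcE Hpow.
Qed.
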